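(* Let $A\in\mathbb{R}^{n\times n}$ be symmetric with eigenvalues $\alpha_1\ge\cdots\ge\alpha_n$, $g\in\mathbb{R}^n$ nonzero, $\Delta>0$, and consider the TRS of minimizing $\frac12x^TAx+x^Tg$ subject to $\|x\|\le\Delta$, in the easy case. With the notation of the context, suppose $\|x_{opt}\|=\|x_k\|=\Delta$. Then $$\sin\angle(x_{opt},x_k)\le\sqrt\kappa\sqrt{\sin^2\angle(x_{opt},\mathcal{K}_k)+\sin^4\angle(x_{opt},\mathcal{K}_k)}\le2\sqrt\kappa\Big(\frac{\sqrt\kappa-1}{\sqrt\kappa+1}\Big)^k+4\sqrt\kappa\Big(\frac{\sqrt\kappa-1}{\sqrt\kappa+1}\Big)^{2k},$$ where $\mathcal{K}_k=\mathcal{K}_k(A,g)$.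
   Context: Norms are Euclidean. $x_{opt}$ is a global minimizer of the TRS with multiplier $\lambda_{opt}\ge0$ ($(A+\lambda_{opt}I)x_{opt}=-g$, $\lambda_{opt}(\Delta-\|x_{opt}\|)=0$, $A+\lambda_{opt}I\succeq0$); easy case: $\lambda_{opt}>-\alpha_n$. $\kappa=(\alpha_1+\lambda_{opt})/(\alpha_n+\lambda_{opt})$. $\mathcal{K}_k(A,g)=\mathrm{span}\{g,Ag,\ldots,A^{k-1}g\}$ with orthonormal basis $Q_k$ from the Lanczos process ($q_1=g/\|g\|$, $T_k=Q_k^TAQ_k$ tridiagonal). GLTR iterate $x_k=Q_kh_k$ where $h_k$ minimizes $\frac12h^TT_kh+\|g\|h^Te_1$ over $\|h\|\le\Delta$. For a nonzero vector $p$ and subspace $\mathcal{W}$ with orthonormal basis $W$, $\sin\angle(p,\mathcal{W})=\|(I-WW^T)p\|/\|p\|$; for vectors, $\sin\angle(x_{opt},x_k)=\min_{\chi}\|x_{opt}/\Delta-\chi x_k\|$. *)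

(* Defs.v *)
From HB Require Import structures.
From mathcomp Require Import all_boot all_order all_algebra.
From mathcomp Require Import classical_sets reals.
Set Implicit Arguments. Unset Strict Implicit. Unset Printing Implicit Defensive.
Import Order.TTheory GRing.Theory Num.Theory.
Local Open Scope ring_scope.

Section TRSDefs.
Variable R : realType.

Definition vnorm (n : nat) (v : 'cV[R]_n) : R := Num.sqrt (\sum_i v i 0 ^+ 2).

Definition trs_obj (n : nat) (A : 'M[R]_n) (g x : 'cV[R]_n) : R :=
  (x^T *m A *m x) 0 0 / 2 + (x^T *m g) 0 0.

(* Krylov matrix: its rows are g, Ag, ..., A^(k-1) g; its row space is K_k(A,g) *)
Definition krylov_mx (n k : nat) (A : 'M[R]_n) (g : 'cV[R]_n) : 'M[R]_(k, n) :=
  \matrix_(i < k, j < n) ((A ^+ i *m g) j 0).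

Definition tridiagonal (k : nat) (T : 'M[R]_k) : Prop :=
  forall i j : 'I_k, (i.+1 < j)%N || (j.+1 < i)%N -> T i j = 0.

(* sin of angle between vector p and subspace with orthonormal basis W *)
Definition sin_vec_sub (n k : nat) (p : 'cV[R]_n) (W : 'M[R]_(n, k)) : R :=
  vnorm ((1%:M - W *m W^T) *m p) / vnorm p.

(* sin angle(x_opt, x_k) = min_chi || x_opt / Delta - chi x_k || *)
Definition sin_vec_vec (n : nat) (Delta : R) (xopt xk : 'cV[R]_n) : R :=
  inf [set vnorm (Delta^-1 *: xopt - chi *: xk) | chi in [set: R]].

End TRSDefs.

(* Main.v *)
Require Import Defs.
From HB Require Import structures.
From mathcomp Require Import all_boot all_order all_algebra.
From mathcomp Require Import classical_sets reals.
From mathcomp Require Import complex.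
From mathcomp Require Import ring lra zify.
From Stdlib Require Import Lia.
Import Order.TTheory GRing.Theory Num.Theory.
Local Open Scope ring_scope.

Set Implicit Arguments. Unset Strict Implicit. Unset Printing Implicit Defensive.


Section PSD.
Variable R : realType.

Lemma realC_real (x : R) : (x%:C)%C \is Num.real.
Proof. by rewrite complex_real. Qed.

Lemma psd_eig n (S : 'M[R]_n) : S^T = S ->
  (forall a, eigenvalue S a -> 0 <= a) ->
  forall v : 'cV[R]_n, 0 <= (v^T *m S *m v) 0 0.
Proof.
move=> Ssym Spos v.
pose f := real_complex R.
pose Sc := map_mx f S.
have herm : Sc \is hermsymmx.
  apply/is_hermitianmxP; rewrite expr0 scale1r.
  apply/matrixP => i j; rewrite !mxE conj_Creal ?realC_real //.
  by have := congr1 (fun M : 'M[R]_n => M j i) Ssym; rewrite mxE => ->.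
have /orthomx_spectralP Sdec := hermitian_normalmx herm.
have dreal := hermitian_spectral_diag_real herm.
set P := spectralmx Sc in Sdec.
set d := spectral_diag Sc in Sdec dreal.
have Pu : P \is unitarymx := spectral_unitarymx Sc.
have PU : P \in unitmx := spectral_unit Sc.
have dpos : forall i, 0 <= d 0 i.
  move=> i.
  have di_real : d 0 i \is Num.real by exact: (mxOverP dreal).
  have -> : d 0 i = f (@complex.Re R (d 0 i)) by rewrite /f RRe_real.
  rewrite ler0c; apply: Spos.
  suff h : root (char_poly Sc) (d 0 i).
    move: h; rewrite -(RRe_real di_real) /Sc -map_char_poly fmorph_root.
    by rewrite -eigenvalue_root_char.
  rewrite -eigenvalue_root_char.
  apply/eigenvalueP; exists (row i P).
    rewrite -row_mul Sdec !mulmxA mulmxV // mul1mx.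
    by rewrite row_mul -row_mul mul_diag_mx; apply/rowP => j; rewrite !mxE.
  apply/eqP => r0.
  have := unitarymxP Pu.
  move/(congr1 (row i)); rewrite row_mul r0 mul0mx => /rowP /(_ i).
  by rewrite !mxE eqxx /= => /eqP; rewrite eq_sym oner_eq0.
pose vc := map_mx f v.
suff : 0 <= (vc^T *m Sc *m vc) 0 0.
  by rewrite /vc /Sc map_trmx -!map_mxM mxE ler0c.
have vcT : vc^T = map_mx Num.conj_op vc^T.
  by apply/matrixP => i j; rewrite !mxE conj_Creal ?realC_real.
rewrite vcT Sdec invmx_unitary //.
pose w := P *m vc.
have -> : map_mx Num.conj_op vc^T *m (map_mx Num.conj_op P^T *m diag_mx d *m P) *m vc
   = map_mx Num.conj_op w^T *m diag_mx d *m w.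
  by rewrite /w trmx_mul map_mxM !mulmxA.
rewrite mul_mx_diag !mxE; apply: sumr_ge0 => j _.
rewrite !mxE mulrAC; apply: mulr_ge0; last exact: dpos.
by rewrite mulrC mul_conjC_ge0.
Qed.
End PSD.



Section Base.
Variable R : realType.

Definition dot n (u v : 'cV[R]_n) : R := (u^T *m v) 0 0.

Lemma dotC n (u v : 'cV[R]_n) : dot u v = dot v u.
Proof. by rewrite /dot -[u^T *m v]trmxK trmx_mul trmxK [in LHS]mxE. Qed.

Lemma dotDl n (u v w : 'cV[R]_n) : dot (u + v) w = dot u w + dot v w.
Proof. by rewrite /dot linearD /= mulmxDl mxE. Qed.

Lemma dotDr n (u v w : 'cV[R]_n) : dot w (u + v) = dot w u + dot w v.
Proof. by rewrite /dot mulmxDr mxE. Qed.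

Lemma dotZl n a (u w : 'cV[R]_n) : dot (a *: u) w = a * dot u w.
Proof. by rewrite /dot linearZ /= -scalemxAl mxE. Qed.

Lemma dotZr n a (u w : 'cV[R]_n) : dot w (a *: u) = a * dot w u.
Proof. by rewrite /dot -scalemxAr mxE. Qed.

Lemma dotNl n (u w : 'cV[R]_n) : dot (- u) w = - dot u w.
Proof. by rewrite -scaleN1r dotZl mulN1r. Qed.

Lemma dotNr n (u w : 'cV[R]_n) : dot w (- u) = - dot w u.
Proof. by rewrite -scaleN1r dotZr mulN1r. Qed.

Lemma dotBl n (u v w : 'cV[R]_n) : dot (u - v) w = dot u w - dot v w.
Proof. by rewrite dotDl dotNl. Qed.

Lemma dotBr n (u v w : 'cV[R]_n) : dot w (u - v) = dot w u - dot w v.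
Proof. by rewrite dotDr dotNr. Qed.

Lemma dot0l n (w : 'cV[R]_n) : dot 0 w = 0.
Proof. by rewrite /dot trmx0 mul0mx mxE. Qed.

Lemma dot0r n (w : 'cV[R]_n) : dot w 0 = 0.
Proof. by rewrite /dot mulmx0 mxE. Qed.

Lemma dotMl m n (M : 'M[R]_(m, n)) (u : 'cV[R]_n) (v : 'cV[R]_m) :
  dot (M *m u) v = dot u (M^T *m v).
Proof. by rewrite /dot trmx_mul mulmxA. Qed.

Lemma dotMr m n (M : 'M[R]_(m, n)) (u : 'cV[R]_n) (v : 'cV[R]_m) :
  dot v (M *m u) = dot (M^T *m v) u.
Proof. by rewrite dotC dotMl dotC. Qed.

Lemma dot_sum n (u : 'cV[R]_n) : dot u u = \sum_i u i 0 ^+ 2.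
Proof. by rewrite /dot mxE; apply: eq_bigr => i _; rewrite mxE expr2. Qed.

Lemma dot_ge0 n (u : 'cV[R]_n) : 0 <= dot u u.
Proof. by rewrite dot_sum; apply: sumr_ge0 => i _; exact: sqr_ge0. Qed.

Lemma dot_eq0 n (u : 'cV[R]_n) : dot u u = 0 -> u = 0.
Proof.
rewrite dot_sum => /eqP; rewrite psumr_eq0; last by move=> i _; exact: sqr_ge0.
move=> /allP H; apply/matrixP => i j; rewrite ord1 mxE.
by have /implyP/(_ isT) := H i (mem_index_enum _); rewrite sqrf_eq0 => /eqP.
Qed.

Lemma vnorm_ge0 n (u : 'cV[R]_n) : 0 <= vnorm u.
Proof. exact: sqrtr_ge0. Qed.

Lemma vnorm_sq n (u : 'cV[R]_n) : vnorm u ^+ 2 = dot u u.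
Proof. by rewrite /vnorm sqr_sqrtr -dot_sum ?dot_ge0. Qed.

Lemma quadE n (S : 'M[R]_n) (v : 'cV[R]_n) : (v^T *m S *m v) 0 0 = dot v (S *m v).
Proof. by rewrite /dot mulmxA. Qed.

End Base.



Section L1.
Variable R : realType.

Lemma eig_shift n (A : 'M[R]_n) c b : eigenvalue (A + c%:M) b -> eigenvalue A (b - c).
Proof.
move/eigenvalueP => [v Hv vn0]; apply/eigenvalueP; exists v => //.
move: Hv; rewrite mulmxDr mul_mx_scalar scalerBl => /(congr1 (fun w => w - c *: v)).
by rewrite addrK.
Qed.

Lemma rayleigh n (A : 'M[R]_n) a1 an : A^T = A ->
  (forall a, eigenvalue A a -> an <= a <= a1) ->
  forall v, an * dot v v <= dot v (A *m v) /\ dot v (A *m v) <= a1 * dot v v.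
Proof.
move=> As Ha v; split.
  have := @psd_eig R n (A + (- an)%:M).
  rewrite linearD /= tr_scalar_mx As => /(_ erefl).
  have : forall a, eigenvalue (A + (- an)%:M) a -> 0 <= a.
    move=> a /eig_shift /Ha /andP[+ _]; rewrite opprK.
    by rewrite -subr_ge0 addrK.
  move=> H /(_ H v); rewrite quadE mulmxDl mul_scalar_mx dotDr dotZr.
  by move=> h; nra.
have := @psd_eig R n (- A + a1%:M).
rewrite linearD linearN /= tr_scalar_mx As => /(_ erefl).
have : forall a, eigenvalue (- A + a1%:M) a -> 0 <= a.
  move=> a /eig_shift /eigenvalueP [w Hw wn0].
  have : eigenvalue A (a1 - a).
    apply/eigenvalueP; exists w => //.
    move: Hw; rewrite mulmxN => /(congr1 (fun x => - x)); rewrite opprK => ->.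
    by rewrite -scaleNr opprB.
  by move/Ha => /andP[_] h; lra.
move=> H' /(_ H' v); rewrite quadE mulmxDl mul_scalar_mx dotDr dotZr mulNmx dotNr.
by move=> h; nra.
Qed.

Lemma contraction n (C : 'M[R]_n) (e : R) : C^T = C -> 0 <= e ->
  (forall v, - (e * dot v v) <= dot v (C *m v) /\ dot v (C *m v) <= e * dot v v) ->
  forall v, dot (C *m v) (C *m v) <= e ^+ 2 * dot v v.
Proof.
move=> Cs e0 H v.
set a := dot (C *m v) (C *m v); set b := dot v v.
have key : forall t, 2 * t * a <= e * (b + t ^+ 2 * a).
  move=> t.
  have [_ H1] := H (v + t *: (C *m v)).
  have [H2 _] := H (v - t *: (C *m v)).
  have E1 : dot v (C *m (C *m v)) = a by rewrite dotMr Cs.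
  have E2 : dot (C *m v) v = dot v (C *m v) by rewrite dotC.
  move: H1 H2.
  rewrite !mulmxDr !mulmxN -!scalemxAr !(dotDl, dotDr, dotNl, dotNr, dotZl, dotZr).
  rewrite E1 E2 -/a -/b => H1 H2.
  have E3 : dot (C *m v) (C *m (C *m v)) = dot (C *m v) (C *m (C *m v)) by [].
  set x1 := dot v (C *m v) in H1 H2.
  set x3 := dot (C *m v) (C *m (C *m v)) in H1 H2.
  nra.
have a0 : 0 <= a by apply: dot_ge0.
have b0 : 0 <= b by apply: dot_ge0.
have [e0eq|e_gt0] := eqVneq e 0.
  by have := key 1; rewrite e0eq; nra.
have ep : 0 < e by rewrite lt_def e_gt0.
have := key e^-1.
have ei : e * e^-1 = 1 by rewrite mulfV.
have ip : 0 < e^-1 by rewrite invr_gt0.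
set i := e^-1 in ei ip *.
move=> K.
have K2 := ler_wpM2l (ltW ep) K.
have E1 : e * (2 * i * a) = 2 * (e * i) * a by ring.
have E2 : e * (e * (b + i ^+ 2 * a)) = e ^+ 2 * b + (e * i) ^+ 2 * a by ring.
rewrite E1 E2 ei in K2.
lra.
Qed.

End L1.



Section L2.
Variable R : realType.
Variable n : nat.
Variable A : 'M[R]_n.
Variable g : 'cV[R]_n.

Definition Kr (j : nat) (v : 'cV[R]_n) : Prop :=
  exists c : nat -> R, v = \sum_(i < j) c i *: (A ^+ i *m g).

Lemma Kr0 j : Kr j 0.
Proof. by exists (fun _ => 0); rewrite big1 // => i _; rewrite scale0r. Qed.

Lemma KrD j u v : Kr j u -> Kr j v -> Kr j (u + v).
Proof.
move=> [c ->] [d ->]; exists (fun i => c i + d i).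
by rewrite -big_split; apply: eq_bigr => i _; rewrite scalerDl.
Qed.

Lemma KrZ j a v : Kr j v -> Kr j (a *: v).
Proof.
move=> [c ->]; exists (fun i => a * c i).
by rewrite scaler_sumr; apply: eq_bigr => i _; rewrite scalerA.
Qed.

Lemma Kr_sum j (I : finType) (F : I -> 'cV[R]_n) :
  (forall i, Kr j (F i)) -> Kr j (\sum_i F i).
Proof.
move=> H; elim/big_ind: _ => //; [exact: Kr0 | exact: KrD].
Qed.

Lemma Kr_mono j j' v : (j <= j')%N -> Kr j v -> Kr j' v.
Proof.
move=> hj [c ->]; exists (fun i => if (i < j)%N then c i else 0).
rewrite (big_ord_widen j' (fun i => c i *: (A ^+ i *m g)) hj) big_mkcond /=.
by apply: eq_bigr => i _; case: ifP => //; rewrite scale0r.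
Qed.

Lemma Kr_A j v : Kr j v -> Kr j.+1 (A *m v).
Proof.
move=> [c ->]; exists (fun i => if i is i'.+1 then c i' else 0).
rewrite big_ord_recl /= scale0r add0r mulmx_sumr.
apply: eq_bigr => i _; rewrite -scalemxAr mulmxA /bump /= add1n.
by rewrite exprS mulmxE.
Qed.

Lemma Kr_g : Kr 1 g.
Proof.
by exists (fun _ => 1); rewrite big_ord1 scale1r expr0 mul1mx.
Qed.

Lemma Kr_krylov k v : Kr k v -> (v^T <= krylov_mx k A g)%MS.
Proof.
move=> [c ->].
have -> : (\sum_(i < k) c i *: (A ^+ i *m g))^T = (\row_(i < k) c i) *m krylov_mx k A g.
  apply/rowP => j; rewrite !mxE summxE; apply: eq_bigr => i _.
  by rewrite !mxE.
exact: submxMl.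
Qed.

Variable lam xi beta : R.
Definition Cm := xi%:M - beta *: (A + lam%:M).

Lemma Kr_C j v : Kr j v -> Kr j.+1 (Cm *m v).
Proof.
move=> Kv; rewrite /Cm mulmxBl mul_scalar_mx -scalemxAl mulmxDl mul_scalar_mx.
have Kv' : Kr j.+1 v by apply: Kr_mono Kv.
apply: KrD; first exact: KrZ.
rewrite -scaleNr; apply: KrZ; apply: KrD; [exact: Kr_A | exact: KrZ].
Qed.

Lemma Kr_Cpow i : Kr i.+1 (Cm ^+ i *m g).
Proof.
elim: i => [|i IH]; first by rewrite expr0 mul1mx; exact: Kr_g.
by rewrite exprS -mulmxE -mulmxA; apply: Kr_C.
Qed.

End L2.



Section L3.
Variable R : realType.

Fixpoint chebTU (j : nat) : {poly R} * {poly R} :=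
  if j is j'.+1 then
    let: (t, u) := chebTU j' in ('X * t + ('X ^+ 2 - 1) * u, t + 'X * u)
  else (1, 0).

Lemma cheb_inv j : (chebTU j).1 ^+ 2 = 1 + (chebTU j).2 * (('X ^+ 2 - 1) * (chebTU j).2).
Proof.
elim: j => [|j] /=; first by rewrite expr1n mul0r addr0.
case: (chebTU j) => t u /= IH.
transitivity (t ^+ 2 - ('X ^+ 2 - 1) * u ^+ 2 + (t + 'X * u) * (('X ^+ 2 - 1) * (t + 'X * u))).
  ring.
by rewrite IH; ring.
Qed.

Lemma size_X2 : (size ('X ^+ 2 - 1 : {poly R})%R <= 3)%N.
Proof.
by rewrite (leq_trans (size_polyD _ _)) // size_polyN size_poly1 size_polyXn.
Qed.

Lemma cheb_size j : (size (chebTU j).1 <= j.+1)%N /\ (size (chebTU j).2 <= j)%N.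
Proof.
elim: j => [|j] /=; first by rewrite size_poly1 size_poly0.
case: (chebTU j) => t u /= [st su]; split.
  rewrite (leq_trans (size_polyD _ _)) // geq_max; apply/andP; split.
    rewrite (leq_trans (size_polyMleq _ _)) // size_polyX.
    by rewrite add2n /=.
  rewrite (leq_trans (size_polyMleq _ _)) //.
  have := size_X2; case: (size u) su => [|s] su /=; first by rewrite addn0 => h; lia.
  by move=> h; lia.
rewrite (leq_trans (size_polyD _ _)) // geq_max; apply/andP; split.
  by rewrite (leq_trans st).
rewrite (leq_trans (size_polyMleq _ _)) // size_polyX.
by rewrite [X in (X + _)%N](_ : _ = 2%N) //; lia.
Qed.

Lemma cheb_eval j (x e : R) : e ^+ 2 = x ^+ 2 - 1 ->
  (chebTU j).1.[x] + e * (chebTU j).2.[x] = (x + e) ^+ j /\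
  (chebTU j).1.[x] - e * (chebTU j).2.[x] = (x - e) ^+ j.
Proof.
move=> He; elim: j => [|j] /=; first by rewrite hornerC horner0 !expr0 mulr0 addr0 subr0.
case: (chebTU j) => t u /= [H1 H2].
rewrite !hornerE /= !exprS -H1 -H2.
have E : x * (x * x ^+ 0) - 1 = e ^+ 2 by rewrite He; ring.
by rewrite E; split; ring.
Qed.

Lemma horner_mx_sym n (C : 'M[R]_n.+1) p : C^T = C -> (horner_mx C p)^T = horner_mx C p.
Proof.
move=> Cs; elim/poly_ind: p => [|p c IH]; first by rewrite rmorph0 trmx0.
rewrite rmorphD rmorphM /= horner_mx_X horner_mx_C linearD /= tr_scalar_mx.
rewrite -mulmxE trmx_mul IH Cs; congr (_ + _).
by rewrite mulmxE; apply: comm_mx_horner.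
Qed.

End L3.



Section L4.
Variable R : realType.
Variable n : nat.
Variable A : 'M[R]_n.+1.
Variable g : 'cV[R]_n.+1.
Variable lam xi beta : R.

Lemma Kr_horner (p : {poly R}) j : (size p <= j)%N ->
  Kr A g j (horner_mx (Cm A lam xi beta) p *m g).
Proof.
move=> sp; rewrite -[p]coefK poly_def rmorph_sum mulmx_suml.
apply: Kr_sum => i; rewrite /= horner_mxZ -scalemxAl rmorphXn /= horner_mx_X.
apply: KrZ; apply: (Kr_mono (j := i.+1)); last exact: Kr_Cpow.
by rewrite (leq_trans _ sp).
Qed.

End L4.

Section L5.
Variable R : realType.

Lemma cheb_bound n (A : 'M[R]_n.+1) (g x : 'cV[R]_n.+1) (lam mu M : R) k :
  A^T = A -> 0 < mu -> mu < M ->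
  (forall v, mu * dot v v <= dot v ((A + lam%:M) *m v) /\
             dot v ((A + lam%:M) *m v) <= M * dot v v) ->
  (A + lam%:M) *m x = - g ->
  exists z, Kr A g k z /\
    dot (x - z) (x - z) <=
      (2 * ((Num.sqrt (M / mu) - 1) / (Num.sqrt (M / mu) + 1)) ^+ k) ^+ 2 * dot x x.
Proof.
move=> As mu0 muM HB Hx.
set r := Num.sqrt (M / mu).
set B := A + lam%:M.
have Bs : B^T = B by rewrite /B linearD /= tr_scalar_mx As.
have M0 : 0 < M by apply: lt_trans mu0 muM.
have r2 : r ^+ 2 = M / mu by rewrite sqr_sqrtr // divr_ge0 // ltW.
have mun0 : mu != 0 by rewrite gt_eqF.
have Mr : M = r ^+ 2 * mu by rewrite r2 mulfVK.
have r0 : 0 <= r := sqrtr_ge0 _.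
have r1 : 1 < r.
  have : 1 < M / mu by rewrite ltr_pdivlMr // mul1r.
  rewrite -r2 => h; nra.
have Mmu : M - mu != 0 by rewrite subr_eq0 gt_eqF.
set xi := (M + mu) / (M - mu).
set beta := 2 / (M - mu).
set C := Cm A lam xi beta.
have Cs : C^T = C by rewrite /C /Cm linearB linearZ /= tr_scalar_mx -/B Bs.
have Cb : forall v, - (1 * dot v v) <= dot v (C *m v) /\ dot v (C *m v) <= 1 * dot v v.
  move=> v; rewrite /C /Cm mulmxBl mul_scalar_mx -scalemxAl dotBr dotZr dotZr -/B.
  have [h1 h2] := HB v; have q0 := dot_ge0 v.
  have e1 : xi - beta * M = -1 by rewrite /xi /beta; field.
  have e2 : xi - beta * mu = 1 by rewrite /xi /beta; field.
  have b0 : 0 <= beta by rewrite /beta divr_ge0 // subr_ge0 ltW.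
  split; nra.
have Ccon := contraction Cs ler01 Cb.
set T := (chebTU R k).1; set U := (chebTU R k).2.
set Tm := horner_mx C T; set Um := horner_mx C U.
have Tms : Tm^T = Tm := horner_mx_sym _ Cs.
have Ums : Um^T = Um := horner_mx_sym _ Cs.
have inv : Tm *m Tm = 1%:M + Um *m ((C *m C - 1%:M) *m Um).
  have := congr1 (horner_mx C) (cheb_inv R k).
  rewrite /= rmorphXn rmorphD rmorph1 !rmorphM rmorphB rmorph1 rmorphXn /= horner_mx_X.
  by rewrite -/T -/U -/Tm -/Um !expr2 !mulmxE.
have Tx : dot (Tm *m x) (Tm *m x) <= dot x x.
  rewrite dotMl Tms mulmxA inv (mulmxDl 1%:M) mul1mx dotDr.
  have -> : Um *m ((C *m C - 1%:M) *m Um) *m x = Um *m (C *m (C *m (Um *m x)) - Um *m x).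
    by rewrite !(mulmxBl, mulmxBr) !mulmxA ?mulmx1 ?mul1mx.
  rewrite dotMr Ums dotBr dotMr Cs.
  have := Ccon (Um *m x); rewrite expr1n mul1r => h; lra.
set e := 2 * r / (r ^+ 2 - 1).
have r2g : 1 < r ^+ 2 by nra.
have r21 : r ^+ 2 - 1 != 0 by rewrite subr_eq0 gt_eqF.
have rp1 : r + 1 != 0 by rewrite gt_eqF // ltr_wpDl.
have rm1 : r - 1 != 0 by rewrite subr_eq0 gt_eqF.
have rmu : r ^+ 2 * mu - mu != 0 by rewrite -{2}[mu]mul1r -mulrBl mulf_neq0.
have He : e ^+ 2 = xi ^+ 2 - 1.
  rewrite /e /xi Mr; field.
  by rewrite rmu r21.
have [E1 E2] := cheb_eval k He.
set tau := T.[xi].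
set rho := (r - 1) / (r + 1).
have xe1 : xi + e = (r + 1) / (r - 1).
  rewrite /e /xi Mr; field.
  by rewrite ?rmu ?r21 ?rp1 ?rm1 ?mun0.
have xe2 : xi - e = rho.
  rewrite /e /xi /rho Mr; field.
  by rewrite ?rmu ?r21 ?rp1 ?rm1 ?mun0.
have prod : (xi + e) * rho = 1.
  rewrite xe1 /rho; field; by rewrite rp1 rm1.
have rho0 : 0 <= rho by apply: divr_ge0; lra.
have taueq : tau = ((xi + e) ^+ k + rho ^+ k) / 2.
  by rewrite -xe2 -E1 -E2 /tau -/T -/U; field.
have xep : 0 < xi + e by rewrite xe1 divr_gt0 // ?subr_gt0 // ltr_wpDl.
have pos : 0 < (xi + e) ^+ k by apply: exprn_gt0.
have rk0 : 0 <= rho ^+ k by apply: exprn_ge0.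
have tau0 : 0 < tau by rewrite taueq; lra.
have pk : (xi + e) ^+ k * rho ^+ k = 1 by rewrite -exprMn prod expr1n.
have key : 1 <= tau * (2 * rho ^+ k) by rewrite taueq; nra.
have itau0 : 0 < tau^-1 by rewrite invr_gt0.
have itau : tau^-1 <= 2 * rho ^+ k.
  have := ler_wpM2l (ltW itau0) key.
  by rewrite mulr1 mulrA mulVf ?gt_eqF // mul1r.
exists (x - tau^-1 *: (Tm *m x)); split.
  have rt : root (tau%:P - T) xi by rewrite /root !hornerE /= -/tau subrr.
  have [q Hq] := factor_theorem _ _ rt.
  have sq : (size q <= k)%N.
    have [->|qn0] := eqVneq q 0; first by rewrite size_poly0.
    have := size_Mmonic qn0 (monicXsubC xi); rewrite -Hq size_XsubC addn2 /= => hs.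
    have [st _] := cheb_size R k.
    have : (size (tau%:P - T)%R <= k.+1)%N.
      rewrite (leq_trans (size_polyD _ _)) // geq_max size_polyN -/T st andbT.
      by rewrite (leq_trans (size_polyC_leq1 _)).
    by rewrite hs.
  have E : tau *: x - Tm *m x = beta *: (horner_mx C q *m g).
    have -> : tau *: x - Tm *m x = horner_mx C (tau%:P - T) *m x.
      by rewrite rmorphB /= horner_mx_C mulmxBl mul_scalar_mx.
    rewrite Hq rmorphM rmorphB /= horner_mx_X horner_mx_C -mulmxE -mulmxA.
    rewrite scalemxAr; congr (_ *m _).
    by rewrite /C /Cm addrAC subrr add0r mulNmx -scalemxAl -/B Hx scalerN opprK.
  have -> : x - tau^-1 *: (Tm *m x) = tau^-1 *: (tau *: x - Tm *m x).
    by rewrite scalerBr scalerA mulVf ?gt_eqF // scale1r.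
  rewrite E scalerA; apply: KrZ; exact: Kr_horner.
rewrite opprB addrC subrK dotZl dotZr.
have dx0 := dot_ge0 x.
have dT0 := dot_ge0 (Tm *m x).
have h1 : tau^-1 * (tau^-1 * dot (Tm *m x) (Tm *m x)) <= tau^-1 * (tau^-1 * dot x x).
  by apply: ler_wpM2l; [exact: ltW | apply: ler_wpM2l; [exact: ltW|]].
apply: (le_trans h1); rewrite mulrA -expr2.
apply: ler_wpM2r => //.
nra.
Qed.

End L5.



Section L6.
Variable R : realType.

Lemma vnormE n (u : 'cV[R]_n) : vnorm u = Num.sqrt (dot u u).
Proof. by rewrite /vnorm dot_sum. Qed.

Lemma flat_case n (A : 'M[R]_n) (g x : 'cV[R]_n) (lam mu : R) k : (0 < k)%N ->
  A^T = A -> 0 < mu ->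
  (forall v, mu * dot v v <= dot v ((A + lam%:M) *m v) /\
             dot v ((A + lam%:M) *m v) <= mu * dot v v) ->
  (A + lam%:M) *m x = - g -> Kr A g k x.
Proof.
move=> k0 As mu0 HB Hx.
set B := A + lam%:M.
have Bs : B^T = B by rewrite /B linearD /= tr_scalar_mx As.
set C := B - mu%:M.
have Cs : C^T = C by rewrite /C linearB /= tr_scalar_mx Bs.
have Cb : forall v, - (0 * dot v v) <= dot v (C *m v) /\ dot v (C *m v) <= 0 * dot v v.
  move=> v; rewrite /C mulmxBl mul_scalar_mx dotBr dotZr.
  have [h1 h2] := HB v; split; lra.
have := contraction Cs (lexx 0) Cb x.
rewrite expr0n /= mul0r => h.
have : C *m x = 0 by apply: dot_eq0; apply/eqP; rewrite eq_le h dot_ge0.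
rewrite /C mulmxBl mul_scalar_mx Hx => /eqP; rewrite subr_eq0 => /eqP hx.
have -> : x = (- mu^-1) *: g.
  by rewrite scaleNr -scalerN hx scalerA mulVf ?gt_eqF // scale1r.
by apply: KrZ; apply: (Kr_mono k0); exact: Kr_g.
Qed.

Lemma cheb_bound_gen n (A : 'M[R]_n) (g x : 'cV[R]_n) (lam mu M : R) k :
  A^T = A -> 0 < mu -> mu < M ->
  (forall v, mu * dot v v <= dot v ((A + lam%:M) *m v) /\
             dot v ((A + lam%:M) *m v) <= M * dot v v) ->
  (A + lam%:M) *m x = - g ->
  exists z, Kr A g k z /\
    dot (x - z) (x - z) <=
      (2 * ((Num.sqrt (M / mu) - 1) / (Num.sqrt (M / mu) + 1)) ^+ k) ^+ 2 * dot x x.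
Proof.
case: n A g x => [|n] A g x; last exact: cheb_bound.
move=> *; exists 0; split; first exact: Kr0.
by rewrite (flatmx0 x) subr0 dot0l mulr0.
Qed.

Lemma fdiff n (A : 'M[R]_n) (g xo x : 'cV[R]_n) (lam D : R) :
  A^T = A -> (A + lam%:M) *m xo = - g ->
  dot xo xo = D ^+ 2 -> dot x x = D ^+ 2 ->
  trs_obj A g x - trs_obj A g xo =
    dot (x - xo) ((A + lam%:M) *m (x - xo)) / 2.
Proof.
move=> As Hx hxo hx.
set B := A + lam%:M.
have Bs : B^T = B by rewrite /B linearD /= tr_scalar_mx As.
have Ae : forall y : 'cV[R]_n, A *m y = B *m y - lam *: y.
  by move=> y; rewrite /B mulmxDl mul_scalar_mx addrK.
have ge : g = - (B *m xo) by rewrite Hx opprK.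
rewrite /trs_obj !quadE -[(x^T *m g) 0 0]/(dot x g) -[(xo^T *m g) 0 0]/(dot xo g).
rewrite !Ae ge; rewrite ?(dotBr, dotBl, dotZr, dotZl, dotNr, dotNl, dotDr, dotDl, mulmxBr, mulmxN, mulmxDr).
have E : dot xo (B *m x) = dot x (B *m xo) by rewrite dotMr Bs dotC.
rewrite E hxo hx.
lra.
Qed.

Lemma best_approx n k (Q : 'M[R]_(n, k)) (xo z : 'cV[R]_n) (c : 'cV[R]_k) :
  Q^T *m Q = 1%:M -> z = Q *m c ->
  dot ((1%:M - Q *m Q^T) *m xo) ((1%:M - Q *m Q^T) *m xo) <= dot (xo - z) (xo - z).
Proof.
move=> QQ ->.
set p := (1%:M - Q *m Q^T) *m xo.
have orth : forall v, dot p (Q *m v) = 0.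
  move=> v; rewrite dotMr /p mulmxA mulmxBr mulmx1 mulmxA QQ mul1mx subrr mul0mx.
  by rewrite dot0l.
have -> : xo - Q *m c = p + Q *m (Q^T *m xo - c).
  by rewrite /p mulmxBl mul1mx mulmxBr !mulmxA addrA subrK.
rewrite !(dotDl, dotDr) orth dotC orth.
have := dot_ge0 (Q *m (Q^T *m xo - c)); lra.
Qed.

End L6.


Unset Implicit Arguments. Set Strict Implicit. Set Printing Implicit Defensive.

Theorem theorem4p4 (R : realType) (n k : nat) (A : 'M[R]_n) (g : 'cV[R]_n)
  (Delta alpha1 alphan : R) (xopt : 'cV[R]_n) (lambda : R)
  (Q : 'M[R]_(n, k)) (T : 'M[R]_k) (h : 'cV[R]_k) (xk : 'cV[R]_n)
  (hk : (0 < k)%N) :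
  (* A symmetric, alpha1 / alphan its largest / smallest eigenvalues *)
  A^T = A ->
  eigenvalue A alpha1 -> eigenvalue A alphan ->
  (forall a : R, eigenvalue A a -> alphan <= a <= alpha1) ->
  g != 0 -> 0 < Delta ->
  (* x_opt: global minimizer of the TRS with multiplier lambda *)
  vnorm xopt <= Delta ->
  (forall y : 'cV[R]_n, vnorm y <= Delta -> trs_obj A g xopt <= trs_obj A g y) ->
  0 <= lambda ->
  (A + lambda%:M) *m xopt = - g ->
  lambda * (Delta - vnorm xopt) = 0 ->
  (forall v : 'cV[R]_n, 0 <= (v^T *m (A + lambda%:M) *m v) 0 0) ->
  (* easy case *)
  - alphan < lambda ->
  (* Lanczos basis Q_k of K_k(A,g): orthonormal columns spanning K_k,
     q_1 = g/||g||, T_k = Q_k^T A Q_k tridiagonal *)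
  Q^T *m Q = 1%:M ->
  (Q^T == krylov_mx k A g)%MS ->
  (forall i : 'I_n, Q i (Ordinal hk) = g i 0 / vnorm g) ->
  T = Q^T *m A *m Q ->
  tridiagonal T ->
  (* GLTR iterate x_k = Q_k h_k, h_k minimizes 1/2 h^T T h + ||g|| h^T e_1 on ||h|| <= Delta *)
  vnorm h <= Delta ->
  (forall h' : 'cV[R]_k, vnorm h' <= Delta ->
     trs_obj T (vnorm g *: delta_mx (Ordinal hk) 0) h
       <= trs_obj T (vnorm g *: delta_mx (Ordinal hk) 0) h') ->
  xk = Q *m h ->
  (* boundary case *)
  vnorm xopt = Delta -> vnorm xk = Delta ->
  let kappa := (alpha1 + lambda) / (alphan + lambda) in
  let sK := sin_vec_sub xopt Q in
  let rho := (Num.sqrt kappa - 1) / (Num.sqrt kappa + 1) in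
  sin_vec_vec Delta xopt xk <= Num.sqrt kappa * Num.sqrt (sK ^+ 2 + sK ^+ 4)
  /\ Num.sqrt kappa * Num.sqrt (sK ^+ 2 + sK ^+ 4)
     <= 2 * Num.sqrt kappa * rho ^+ k + 4 * Num.sqrt kappa * rho ^+ (2 * k).
Proof.
move=> As eig1 eign eigb gn0 D0 nx Hmin lam0 Hx compl psdB easy QQ QK Q1 Teq Ttri
  nh Hh xkeq nxD nxkD kappa sK rho.
set mu := alphan + lambda.
set M := alpha1 + lambda.
have mu0 : 0 < mu by rewrite /mu; lra.
have anal : alphan <= alpha1 by have /andP[] := eigb _ eig1.
have muM : mu <= M by rewrite /mu /M; lra.
have HB : forall v, mu * dot v v <= dot v ((A + lambda%:M) *m v) /\
                    dot v ((A + lambda%:M) *m v) <= M * dot v v.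
  move=> v; have [h1 h2] := rayleigh As eigb v.
  rewrite mulmxDl mul_scalar_mx dotDr dotZr /mu /M; split; nra.
have Mk : M = mu * kappa by rewrite /kappa -/M -/mu; field; rewrite gt_eqF.
have kap1 : 1 <= kappa.
  rewrite /kappa -/M -/mu ler_pdivlMr // mul1r //.
have dxo : dot xopt xopt = Delta ^+ 2 by rewrite -vnorm_sq nxD.
have dxk : dot xk xk = Delta ^+ 2 by rewrite -vnorm_sq nxkD.
set ng := vnorm g.
have ng0 : 0 < ng.
  rewrite lt_def vnorm_ge0 andbT; apply/eqP => hh; move: gn0.
  have : dot g g = 0 by rewrite -vnorm_sq -/ng hh expr0n.
  by move/dot_eq0 => ->; rewrite eqxx.
set e1 := (delta_mx (Ordinal hk) (0 : 'I_1) : 'cV[R]_k).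
have gQ : g = ng *: (Q *m e1).
  apply/matrixP => i j; rewrite ord1 -colE !mxE Q1 mulrC divfK ?gt_eqF //.
have QTg : Q^T *m g = ng *: e1 by rewrite gQ -scalemxAr mulmxA QQ mul1mx.
have trsQ : forall h', trs_obj T (ng *: e1) h' = trs_obj A g (Q *m h').
  by move=> h'; rewrite /trs_obj Teq -QTg trmx_mul !mulmxA.
have normQ : forall h', dot (Q *m h') (Q *m h') = dot h' h'.
  by move=> h'; rewrite dotMl mulmxA QQ mul1mx.
set w := Q^T *m xopt.
set cw := vnorm w.
have cw0 : 0 <= cw := vnorm_ge0 w.
have dw : dot w w = cw ^+ 2 by rewrite vnorm_sq.
have [h' [dh' yh']] : exists h' : 'cV[R]_k,
    dot h' h' = Delta ^+ 2 /\ dot (Q *m h') xopt = Delta * cw.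
  have [cwz|cwnz] := eqVneq cw 0.
    exists (Delta *: e1); split.
      rewrite dotZl dotZr /dot trmx_delta mul_delta_mx mxE !eqxx /=.
      by rewrite mulr1 expr2.
    rewrite dotMl -/w.
    have w0 : w = 0 by apply: dot_eq0; rewrite dw cwz expr0n.
    by rewrite w0 dot0r cwz mulr0.
  exists ((Delta / cw) *: w); split.
    by rewrite dotZl dotZr dw; field.
  by rewrite dotMl -/w dotZl dw; field.
set y := Q *m h'.
have dy : dot y y = Delta ^+ 2 by rewrite normQ.
have nh' : vnorm h' <= Delta by rewrite vnormE dh' sqrtr_sqr ger0_norm // ltW.
have fk : trs_obj A g xk <= trs_obj A g y by rewrite xkeq -!trsQ; apply: Hh.
have e_k := fdiff As Hx dxo dxk.
have e_y := fdiff As Hx dxo dy.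
have [hk1 _] := HB (xk - xopt).
have [_ hy2] := HB (y - xopt).
have dyx : dot (y - xopt) (y - xopt) = 2 * Delta ^+ 2 - 2 * (Delta * cw).
  rewrite !(dotBl, dotBr) dy dxo (dotC xopt y) yh'; ring.
have main1 : mu * dot (xk - xopt) (xk - xopt) <= M * (2 * Delta ^+ 2 - 2 * (Delta * cw)).
  rewrite -dyx; lra.
have pe : dot ((1%:M - Q *m Q^T) *m xopt) ((1%:M - Q *m Q^T) *m xopt)
          = Delta ^+ 2 - cw ^+ 2.
  rewrite mulmxBl mul1mx -mulmxA -/w !(dotBl, dotBr) dxo normQ dw.
  rewrite (dotC xopt) dotMl -/w dw; ring.
have sKe : sK = Num.sqrt (Delta ^+ 2 - cw ^+ 2) / Delta.
  by rewrite /sK /sin_vec_sub vnormE pe nxD.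
have cwD : cw <= Delta.
  have := dot_ge0 ((1%:M - Q *m Q^T) *m xopt); rewrite pe => hh; nra.
set c := cw / Delta.
have c0 : 0 <= c by rewrite /c divr_ge0 // ltW.
have c1 : c <= 1 by rewrite /c ler_pdivrMr // mul1r.
have sK2 : sK ^+ 2 = 1 - c ^+ 2.
  rewrite sKe expr_div_n sqr_sqrtr; last by rewrite subr_ge0; nra.
  by rewrite /c; field; rewrite gt_eqF.
have sK0 : 0 <= sK by rewrite sKe divr_ge0 // ?sqrtr_ge0 // ltW.
have sqk0 : 0 <= Num.sqrt kappa := sqrtr_ge0 _.
split.
  have sv : sin_vec_vec Delta xopt xk <= vnorm (Delta^-1 *: xopt - Delta^-1 *: xk).
    apply: (ge_inf _); last by exists Delta^-1.
    by exists 0 => _ [chi _ <-]; exact: vnorm_ge0.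
  apply: (le_trans sv).
  set q := dot (xk - xopt) (xk - xopt).
  have q1 : q <= kappa * (Delta ^+ 2 * (2 - 2 * c)).
    have E : Delta ^+ 2 * (2 - 2 * c) = 2 * Delta ^+ 2 - 2 * (Delta * cw).
      by rewrite /c; field; rewrite gt_eqF.
    by rewrite E -(ler_pM2l mu0); move: main1; rewrite Mk -mulrA.
  have poly : 2 - 2 * c <= sK ^+ 2 + sK ^+ 4.
    have hh : 0 <= c * ((c - 1) ^+ 2 * (c + 2)).
      by apply: mulr_ge0 => //; apply: mulr_ge0; [exact: sqr_ge0 | lra].
    rewrite -[4%N]/(2 * 2)%N exprM sK2; nra.
  have D2 : vnorm (Delta^-1 *: xopt - Delta^-1 *: xk) ^+ 2 <= kappa * (sK ^+ 2 + sK ^+ 4).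
    rewrite vnorm_sq -scalerBr dotZl dotZr.
    have -> : dot (xopt - xk) (xopt - xk) = q by rewrite /q -opprB dotNl dotNr opprK.
    have Dp : 0 < Delta ^+ 2 by apply: exprn_gt0.
    have k0 : 0 <= kappa by lra.
    have h2 : Delta^-1 * (Delta^-1 * q) = q / Delta ^+ 2 by rewrite expr2 invfM mulrA mulrC.
    rewrite h2 ler_pdivrMr //.
    apply: (le_trans q1); rewrite -[kappa * _ * _]mulrA; apply: (ler_wpM2l k0).
    by rewrite mulrC; apply: ler_wpM2r => //; exact: ltW.
  rewrite -sqrtrM; last by lra.
  rewrite -[vnorm _]ger0_norm ?vnorm_ge0 // -sqrtr_sqr ler_sqrt //.
  by apply: mulr_ge0; [lra | apply: addr_ge0; apply: exprn_ge0].
have sk1 : 1 <= Num.sqrt kappa.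
  rewrite -[X in X <= _]sqrtr1 ler_sqrt //; lra.
have rho0 : 0 <= rho by rewrite /rho divr_ge0 //; lra.
have rk0 : 0 <= rho ^+ k by apply: exprn_ge0.
have Kbest : forall z, Kr A g k z -> Delta ^+ 2 - cw ^+ 2 <= dot (xopt - z) (xopt - z).
  move=> z /Kr_krylov Kz.
  have : (z^T <= Q^T)%MS by apply: (submx_trans Kz); case/andP: QK.
  case/submxP => D zD.
  rewrite -pe; apply: (@best_approx R n k Q xopt z D^T QQ).
  by rewrite -[z]trmxK zD trmx_mul trmxK.
have s_bound : sK <= 2 * rho ^+ k.
  have [muMl | muMe] : mu < M \/ mu = M.
    by move: muM; rewrite le_eqVlt => /orP [/eqP ->|->]; [right|left].
    have [z [Kz dz]] := cheb_bound_gen k As mu0 muMl HB Hx.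
    have dz' : Delta ^+ 2 - cw ^+ 2 <= (2 * rho ^+ k) ^+ 2 * Delta ^+ 2.
      by have := le_trans (Kbest z Kz) dz; rewrite dxo.
    have : sK ^+ 2 <= (2 * rho ^+ k) ^+ 2.
      rewrite sK2 /c expr_div_n -(ler_pM2r (exprn_gt0 2 D0)) mulrBl mul1r.
      by rewrite divfK // gt_eqF // exprn_gt0.
    nra.
  have HB' : forall v, mu * dot v v <= dot v ((A + lambda%:M) *m v) /\
                    dot v ((A + lambda%:M) *m v) <= mu * dot v v.
    by move=> v; rewrite {2}muMe; exact: HB.
  have Kx := flat_case hk As mu0 HB' Hx.
  have := Kbest _ Kx; rewrite subrr dot0l => hh.
  have : sK ^+ 2 <= 0.
    rewrite sK2 /c expr_div_n -(ler_pM2r (exprn_gt0 2 D0)) mulrBl mul1r mul0r.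
    by rewrite divfK // gt_eqF // exprn_gt0.
  nra.
have sq : Num.sqrt (sK ^+ 2 + sK ^+ 4) <= sK + sK ^+ 2.
  rewrite -[sK + _]ger0_norm ?addr_ge0 ?exprn_ge0 // -sqrtr_sqr ler_sqrt ?sqr_ge0 //.
  rewrite -[4%N]/(2 * 2)%N exprM; nra.
rewrite mulnC exprM.
set t := rho ^+ k in s_bound rk0 *.
have : sK + sK ^+ 2 <= 2 * t + 4 * t ^+ 2 by nra.
move=> hh; have := ler_wpM2l sqk0 (le_trans sq hh); nra.
Qed.
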